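(* For all positive integers $n$, \[ g(n)\le f_3(2n,4,3)\le 2\lceil\log n\rceil^2 g(n). \]
   Context: Logarithms are base 2. The grid graph $\Gamma_{n,n}$ has vertex set $[n]\times[n]$, distinct vertices $(i,j),(i',j')$ adjacent iff $i=i'$ or $j=j'$. A rectangle is the induced subgraph on $\{(i,j),(i',j),(i,j'),(i',j')\}$ with $i<i'$, $j<j'$; in an edge coloring it is alternating if $\{(i,j),(i',j)\}$ and $\{(i,j'),(i',j')\}$ share a color and $\{(i,j),(i,j')\}$ and $\{(i',j),(i',j')\}$ share a color. $g(n)$ is the minimum $r$ for which some edge coloring of $\Gamma_{n,n}$ with $r$ colors has no alternating rectangle. $f_3(N,4,3)$ is the minimum $r$ for which there is a coloring of the triples of an $N$-element set (the edges of $K_N^{(3)}$) with $r$ colors such that every set of $4$ vertices has at least $3$ distinct colors on its $4$ triples. *)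

(* Defs.v *)
From mathcomp Require Import all_boot.
From Stdlib Require Import ClassicalEpsilon.

Definition pbool (P : Prop) : bool :=
  if excluded_middle_informative P then true else false.

Lemma pboolP (P : Prop) : reflect P (pbool P).
Proof. by rewrite /pbool; case: excluded_middle_informative => h; constructor. Qed.
Unset Printing Implicit Defensive.

Definition gvert (n : nat) : finType := ('I_n * 'I_n)%type.

Definition grid_adj (n : nat) (u v : gvert n) : bool :=
  (u != v) && ((u.1 == v.1) || (u.2 == v.2)).

(* An edge coloring of Gamma_{n,n} with r colors: a map on edges {u,v}
   (unordered pairs, represented as 2-element sets) with values in {0..r-1}.
   Values on non-edges are irrelevant. *)
Definition grid_coloring (n r : nat) (c : {set gvert n} -> nat) : Prop :=
  forall u v : gvert n, grid_adj n u v -> c [set u; v] < r.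

Definition alternating_rect (n : nat) (c : {set gvert n} -> nat)
    (i i' j j' : 'I_n) : Prop :=
  c [set (i, j); (i', j)] = c [set (i, j'); (i', j')] /\
  c [set (i, j); (i, j')] = c [set (i', j); (i', j')].

Definition has_alternating_rect (n : nat) (c : {set gvert n} -> nat) : Prop :=
  exists i i' j j' : 'I_n, [/\ i < i', j < j' & alternating_rect n c i i' j j'].

Definition g_ok (n r : nat) : Prop :=
  exists c : {set gvert n} -> nat, grid_coloring n r c /\ ~ has_alternating_rect n c.

Lemma g_ok_exists n : exists r, pbool (g_ok n r).
Proof.
exists #|{set gvert n}|; apply/pboolP; exists (fun e => nat_of_ord (enum_rank e)); split.
  by move=> u v _; exact: ltn_ord.
case=> i [i' [j [j' [lti ltj [E _]]]]].
have E' := enum_rank_inj (ord_inj E).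
have : (i, j) \in [set (i, j'); (i', j')] by rewrite -E' !inE eqxx.
rewrite !inE !xpair_eqE eqxx /= => /orP[/eqP ejj|/andP[/eqP eii _]].
  by move: ltj; rewrite ejj ltnn.
by move: lti; rewrite eii ltnn.
Qed.

Definition g (n : nat) : nat := ex_minn (g_ok_exists n).

Definition triple_coloring (N r : nat) (c : {set 'I_N} -> nat) : Prop :=
  forall T : {set 'I_N}, #|T| = 3 -> c T < r.

Definition ncolors (N : nat) (c : {set 'I_N} -> nat) (S : {set 'I_N}) : nat :=
  size (undup [seq c T | T <- enum [set T in powerset S | #|T| == 3]]).

Definition f3_ok (N r : nat) : Prop :=
  exists c : {set 'I_N} -> nat, triple_coloring N r c /\
    forall S : {set 'I_N}, #|S| = 4 -> 3 <= ncolors N c S.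

Lemma f3_ok_exists N : exists r, pbool (f3_ok N r).
Proof.
exists #|{set 'I_N}|; apply/pboolP; exists (fun e => nat_of_ord (enum_rank e)); split.
  by move=> T _; exact: ltn_ord.
move=> S cS; rewrite /ncolors undup_id; last first.
  rewrite map_inj_in_uniq ?enum_uniq //.
  by move=> x y _ _ /ord_inj/enum_rank_inj.
rewrite size_map -cardE.
have [x xS] : exists x, x \in S.
  by apply/set0Pn; rewrite -card_gt0 cS.
pose h := fun y : 'I_N => S :\ y.
have hinj : {in S &, injective h}.
  move=> y z yS zS /setP/(_ y); rewrite /h !inE eqxx yS /=.
  by case: eqP => // _ /negbT; rewrite andbT negbK => /eqP.
have le3 : 3 <= #|h @: S|.-1 by rewrite (card_in_imset hinj) cS.
apply: leq_trans le3 (leq_trans (leq_pred _) (subset_leq_card _)).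
apply/subsetP => _ /imsetP[y yS ->]; rewrite !inE subD1set /=.
by move: cS; rewrite (cardsD1 y S) yS add1n => -[->].
Qed.

Definition f3 (N : nat) : nat := ex_minn (f3_ok_exists N).

(* Main.v *)
Require Import Defs.
From mathcomp Require Import all_boot.
From mathcomp Require Import zify.
Set Implicit Arguments. Unset Strict Implicit.

Lemma divmod_inj m x1 x2 p1 p2 : p1 < m -> p2 < m -> x1 * m + p1 = x2 * m + p2 -> x1 = x2 /\ p1 = p2.
Proof. move=> h1 h2 e. have : x1 = x2 by nia. move=> ?; subst; lia. Qed.

Lemma ncol3 N (c : {set 'I_N} -> nat) (S T1 T2 T3 : {set 'I_N}) :
  T1 \subset S -> T2 \subset S -> T3 \subset S -> #|T1| = 3 -> #|T2| = 3 -> #|T3| = 3 ->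
  c T1 != c T2 -> c T1 != c T3 -> c T2 != c T3 -> 3 <= ncolors N c S.
Proof.
move=> s1 s2 s3 e1 e2 e3 n12 n13 n23; rewrite /ncolors.
have mem (T : {set 'I_N}) : T \subset S -> #|T| = 3 ->
   c T \in undup [seq c T | T <- enum [set T in powerset S | #|T| == 3]].
  by move=> sT eT; rewrite mem_undup; apply: map_f; rewrite mem_enum inE powersetE sT eT.
apply: (leq_trans _ (uniq_leq_size (s1 := [:: c T1; c T2; c T3]) _ _)) => //.
  by rewrite /= !inE negb_or n12 n13 n23.
by move=> x; rewrite !inE => /or3P [] /eqP ->; apply: mem.
Qed.

Section Part2.
Variables (n : nat) (hn : 0 < n) (L : nat) (hL : n <= 2 ^ L).

Definition ky (u : 'I_(2 * n)) : nat := if u < n then (u : nat) else 2 ^ L + (u - n).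

Lemma ky_inj : injective ky.
Proof.
move=> u v; rewrite /ky => h; apply: val_inj => /=.
have := hL; have := ltn_ord u; have := ltn_ord v.
by case: (ltnP u n) h => hu; case: (ltnP v n) => hv h ? ? ?; lia.
Qed.

Lemma ky_lt u : ky u < 2 ^ L.+1.
Proof. rewrite /ky expnS; have := hL; have := ltn_ord u; case: (ltnP u n) => hu ? ?; lia. Qed.

Lemma ky_mod u : ky u %% 2 ^ L < n.
Proof.
rewrite /ky; have := hL; have := ltn_ord u; case: (ltnP u n) => hu hu2 hl.
  by rewrite modn_small //; lia.
by rewrite addnC modnDr modn_small; lia.
Qed.

Lemma ky_mods s u : s <= L -> ky u %% 2 ^ s < n.
Proof.
move=> hs; apply: leq_ltn_trans (ky_mod u).
rewrite -(modn_dvdm _ (dvdn_exp2l 2 hs)); exact: leq_mod.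
Qed.

Definition Bk s u := ky u %/ 2 ^ s.

Lemma Bk0 u : Bk 0 u = ky u. Proof. by rewrite /Bk expn0 divn1. Qed.

Lemma BkS s u : Bk s.+1 u = (Bk s u)./2.
Proof. by rewrite /Bk expnS mulnC divnMA divn2. Qed.

Lemma Bk_mono s t u v : s <= t -> Bk s u = Bk s v -> Bk t u = Bk t v.
Proof.
move=> /subnK <-; elim: (t - s) => [//|m IH] h.
by rewrite addSn !BkS IH.
Qed.

Definition side s u := odd (Bk s u).

Lemma Bk_split s u v : Bk s.+1 u = Bk s.+1 v -> side s u = side s v -> Bk s u = Bk s v.
Proof.
rewrite !BkS /side => h1 h2.
by rewrite -(odd_double_half (Bk s u)) -(odd_double_half (Bk s v)) h1 h2.
Qed.

Lemma side_Bk s u v : side s u != side s v -> Bk s u != Bk s v.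
Proof. by apply: contra => /eqP; rewrite /side => ->. Qed.

Definition Pb (X : {set 'I_(2 * n)}) s := [forall u in X, forall v in X, Bk s.+1 u == Bk s.+1 v].

Lemma Pb_L X : Pb X L.
Proof.
apply/forall_inP => u _; apply/forall_inP => v _.
by rewrite /Bk !divn_small ?ky_lt.
Qed.

Definition sX X := ex_minn (ex_intro (Pb X) L (Pb_L X)).

Lemma sXP X : Pb X (sX X).
Proof. by rewrite /sX; case: ex_minnP. Qed.
Lemma sX_min X s : Pb X s -> sX X <= s.
Proof. by rewrite /sX; case: ex_minnP => m _ h /h. Qed.
Lemma sX_le X : sX X <= L.
Proof. exact/sX_min/Pb_L. Qed.

Lemma PbE (X : {set 'I_(2 * n)}) s u v : Pb X s -> u \in X -> v \in X -> Bk s.+1 u = Bk s.+1 v.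
Proof. by move=> /forall_inP h /h /forall_inP h2 /h2 /eqP. Qed.

Lemma sX_sub (U X : {set 'I_(2 * n)}) : U \subset X -> sX U <= sX X.
Proof.
move=> /subsetP sub; apply: sX_min; apply/forall_inP => u hu; apply/forall_inP => v hv.
by apply/eqP; apply: (PbE (sXP X)); apply: sub.
Qed.

Lemma sX_lower (T : {set 'I_(2 * n)}) s u v : u \in T -> v \in T -> Bk s u != Bk s v -> s <= sX T.
Proof.
move=> hu hv; apply: contraR; rewrite -ltnNge => lt.
by apply/eqP; apply: (Bk_mono lt); apply: (PbE (sXP T)).
Qed.

Lemma sX1 z : sX [set z] = 0.
Proof.
apply/eqP; rewrite -leqn0; apply: sX_min.
by apply/forall_inP => u /set1P ->; apply/forall_inP => v /set1P ->.
Qed.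

Lemma same_Bk (X : {set 'I_(2 * n)}) u v : u \in X -> v \in X -> side (sX X) u = side (sX X) v ->
  Bk (sX X) u = Bk (sX X) v.
Proof. by move=> hu hv; apply: Bk_split; apply: (PbE (sXP X)). Qed.

Lemma pair_lt (X : {set 'I_(2 * n)}) a1 a2 : a1 \in X -> a2 \in X -> a1 != a2 ->
  side (sX X) a1 = side (sX X) a2 -> 0 < sX X /\ sX [set a1; a2] < sX X.
Proof.
move=> h1 h2 ne hs; have hB := same_Bk h1 h2 hs.
case E: (sX X) hB => [|s] hB.
  by move: hB; rewrite !Bk0 => /ky_inj; move/eqP: ne.
split => //; rewrite ltnS; apply: sX_min.
by apply/forall_inP => u /set2P [] ->; apply/forall_inP => v /set2P [] -> //; apply/eqP.
Qed.

Lemma all_same (X : {set 'I_(2 * n)}) : (forall u v, u \in X -> v \in X -> side (sX X) u = side (sX X) v) ->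
  forall u v, u \in X -> v \in X -> u = v.
Proof.
move=> hall u v hu hv; apply/eqP; apply: contraT => ne.
have [h0 hlt] := pair_lt hu hv ne (hall _ _ hu hv).
have : sX X <= (sX X).-1.
  apply: sX_min; apply/forall_inP => x hx; apply/forall_inP => y hy.
  by rewrite prednK //; apply/eqP; apply: same_Bk => //; apply: hall.
by rewrite -ltnS prednK // ltnn.
Qed.

Definition Sd (X : {set 'I_(2 * n)}) := [set u | side (sX X) u].
Definition Aside (X : {set 'I_(2 * n)}) := X :\: Sd X.
Definition Bside (X : {set 'I_(2 * n)}) := X :&: Sd X.

Lemma card_sides (X : {set 'I_(2 * n)}) : #|Bside X| + #|Aside X| = #|X|.
Proof. exact: cardsID. Qed.

Lemma two_sides (X : {set 'I_(2 * n)}) : 1 < #|X| -> 0 < #|Aside X| /\ 0 < #|Bside X|.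
Proof.
case/card_gt1P => u [v [hu hv ne]].
rewrite !card_gt0; split; apply/set0Pn.
- case: (pickP (mem (Aside X))) => [x hx|hno]; first by exists x.
  exfalso; move/eqP: ne; apply; apply: (all_same _ hu hv) => x y hx hy.
  have hs z : z \in X -> side (sX X) z.
    by move=> hz; have := hno z; rewrite /= !inE hz andbT => /negbFE.
  by rewrite !hs.
- case: (pickP (mem (Bside X))) => [x hx|hno]; first by exists x.
  exfalso; move/eqP: ne; apply; apply: (all_same _ hu hv) => x y hx hy.
  have hs z : z \in X -> side (sX X) z = false.
    by move=> hz; have := hno z; rewrite /= !inE hz.
  by rewrite !hs.
Qed.


Definition idx s u : 'I_n := Ordinal (ltn_pmod (ky u %% 2 ^ s) hn).

Lemma idx_inj (X : {set 'I_(2 * n)}) u v : u \in X -> v \in X ->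
  side (sX X) u = side (sX X) v -> idx (sX X) u = idx (sX X) v -> u = v.
Proof.
move=> hu hv hs /(congr1 val) /=; rewrite !(modn_small (ky_mods _ (sX_le _))) => hm.
have hB := same_Bk hu hv hs; apply: ky_inj.
by rewrite (divn_eq (ky u) (2 ^ sX X)) (divn_eq (ky v) (2 ^ sX X)) hm; move: hB; rewrite /Bk => ->.
Qed.

Lemma sides_of (T P Q : {set 'I_(2 * n)}) :
  (forall x, x \in P -> ~~ side (sX T) x) -> (forall x, x \in Q -> side (sX T) x) ->
  T = P :|: Q -> Aside T = P /\ Bside T = Q.
Proof.
move=> hP hQ eT; split; apply/setP => x; rewrite !inE [in x \in T]eT !inE.
all: move: (hP x) (hQ x); case: (x \in P); case: (x \in Q);
  case: (side (sX T) x) => //= h1 h2; by [have := h1 isT | have := h2 isT].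
Qed.

Lemma triple_shape (T : {set 'I_(2 * n)}) : #|T| = 3 ->
  (exists a1 a2 b, [/\ a1 != a2, Aside T = [set a1; a2] & Bside T = [set b]]) \/
  (exists a b1 b2, [/\ b1 != b2, Aside T = [set a] & Bside T = [set b1; b2]]).
Proof.
move=> h3; have := card_sides T; have [] := two_sides (X := T); first by rewrite h3.
rewrite h3 => hA hB hs.
have [[eA eB]|[eA eB]] : (#|Aside T| = 2 /\ #|Bside T| = 1) \/ (#|Aside T| = 1 /\ #|Bside T| = 2) by lia.
- left; move/eqP: eA => /cards2P [a1 [a2 [ne ->]]].
  by move/eqP: eB => /cards1P [b ->]; exists a1, a2, b.
- right; move/eqP: eA => /cards1P [a ->].
  by move/eqP: eB => /cards2P [b1 [b2 [ne ->]]]; exists a, b1, b2.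
Qed.

Lemma Aside_sub T : Aside T \subset T. Proof. exact: subsetDl. Qed.
Lemma Bside_sub T : Bside T \subset T. Proof. exact: subsetIl. Qed.
Lemma Aside_side T x : x \in Aside T -> side (sX T) x = false.
Proof. by rewrite !inE => /andP [/negbTE]. Qed.
Lemma Bside_side T x : x \in Bside T -> side (sX T) x = true.
Proof. by rewrite !inE => /andP [_ ->]. Qed.

Variables (gg : nat) (phi : {set gvert n} -> nat) (Hcol : grid_coloring n gg phi)
  (Hna : ~ has_alternating_rect n phi).

Definition E (T : {set 'I_(2 * n)}) : {set gvert n} :=
  [set (idx (sX T) u, idx (sX T) w) | u in Aside T, w in Bside T].
Definition dX T := sX (Aside T) + sX (Bside T).
Definition tX T : nat := #|Bside T| == 2.
Definition code T := (((sX T).-1 * L + dX T) * 2 + tX T) * gg + phi (E T).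

Lemma triple_facts (T : {set 'I_(2 * n)}) : #|T| = 3 ->
  [/\ 0 < sX T, dX T < sX T & phi (E T) < gg].
Proof.
move=> /triple_shape [[a1 [a2 [b [ne hA hB]]]]|[a [b1 [b2 [ne hA hB]]]]].
- have ha1 : a1 \in Aside T by rewrite hA !inE eqxx.
  have ha2 : a2 \in Aside T by rewrite hA !inE eqxx orbT.
  have [h0 hlt] := pair_lt (subsetP (Aside_sub T) _ ha1) (subsetP (Aside_sub T) _ ha2) ne
    (etrans (Aside_side ha1) (esym (Aside_side ha2))).
  split => //; first by rewrite /dX hA hB sX1 addn0.
  rewrite /E hA hB imset2_set1r imsetU1 imset_set1; apply: Hcol.
  rewrite /grid_adj /= eqxx orbT andbT; apply/eqP => /(congr1 fst) /= heq; move/eqP: ne; apply; apply: (idx_inj (subsetP (Aside_sub T) _ ha1)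
    (subsetP (Aside_sub T) _ ha2) (etrans (Aside_side ha1) (esym (Aside_side ha2))) heq).
- have hb1 : b1 \in Bside T by rewrite hB !inE eqxx.
  have hb2 : b2 \in Bside T by rewrite hB !inE eqxx orbT.
  have [h0 hlt] := pair_lt (subsetP (Bside_sub T) _ hb1) (subsetP (Bside_sub T) _ hb2) ne
    (etrans (Bside_side hb1) (esym (Bside_side hb2))).
  split => //; first by rewrite /dX hA hB sX1.
  rewrite /E hA hB imset2_set1l imsetU1 imset_set1; apply: Hcol.
  rewrite /grid_adj /= eqxx /= andbT; apply/eqP => /(congr1 snd) /= heq; move/eqP: ne; apply; apply: (idx_inj (subsetP (Bside_sub T) _ hb1)
    (subsetP (Bside_sub T) _ hb2) (etrans (Bside_side hb1) (esym (Bside_side hb2))) heq).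
Qed.


Lemma code_lt (T : {set 'I_(2 * n)}) : #|T| = 3 -> code T < 2 * L ^ 2 * gg.
Proof.
move=> /triple_facts [h0 hd hp]; have hs := sX_le T; rewrite /code.
have ht : tX T < 2 by rewrite /tX; case: (_ == _).
have hX : ((sX T).-1 * L + dX T) * 2 + tX T < 2 * L ^ 2.
  have : (sX T).-1 * L + dX T < L * L.
    have : (sX T).-1 < L by lia.
    have : dX T < L by lia.
    nia.
  rewrite expnS expn1; lia.
nia.
Qed.

Lemma code_inj (T1 T2 : {set 'I_(2 * n)}) : #|T1| = 3 -> #|T2| = 3 -> code T1 = code T2 ->
  [/\ sX T1 = sX T2, dX T1 = dX T2, tX T1 = tX T2 & phi (E T1) = phi (E T2)].
Proof.
move=> /triple_facts [a0 ad ap] /triple_facts [b0 bd bp]; rewrite /code.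
have [] := (sX_le T1, sX_le T2) => l1 l2.
move=> /(divmod_inj ap bp) [e1 ->].
have t1 : tX T1 < 2 by rewrite /tX; case: (_ == _).
have t2 : tX T2 < 2 by rewrite /tX; case: (_ == _).
move: e1 => /(divmod_inj t1 t2) [e1 ->].
have d1 : dX T1 < L by lia.
have d2 : dX T2 < L by lia.
have [e3 e2] := divmod_inj d1 d2 e1.
split => //; lia.
Qed.

Lemma sX_eq (T S : {set 'I_(2 * n)}) u v : T \subset S -> u \in T -> v \in T ->
  side (sX S) u != side (sX S) v -> sX T = sX S.
Proof.
move=> sub hu hv hs; apply/eqP; rewrite eqn_leq sX_sub //.
exact: (sX_lower hu hv (side_Bk hs)).
Qed.

Lemma cross (S P Q : {set 'I_(2 * n)}) u v : P \subset Aside S -> Q \subset Bside S ->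
  u \in P -> v \in Q ->
  [/\ P :|: Q \subset S, #|P :|: Q| = #|P| + #|Q|, sX (P :|: Q) = sX S,
      dX (P :|: Q) = sX P + sX Q & tX (P :|: Q) = (#|Q| == 2) /\
      E (P :|: Q) = [set (idx (sX S) x, idx (sX S) w) | x in P, w in Q]].
Proof.
move=> /subsetP hP /subsetP hQ hu hv.
have sub : P :|: Q \subset S.
  apply/subsetP => x; rewrite inE => /orP [/hP|/hQ] hx.
    exact: (subsetP (Aside_sub S)).
  exact: (subsetP (Bside_sub S)).
have es : sX (P :|: Q) = sX S.
  apply: (sX_eq (u := u) (v := v)) => //; rewrite ?inE ?hu ?hv ?orbT //.
  by rewrite (Aside_side (hP _ hu)) (Bside_side (hQ _ hv)).
have [eA eB] : Aside (P :|: Q) = P /\ Bside (P :|: Q) = Q.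
  apply: sides_of => // x hx; rewrite es.
    by rewrite (Aside_side (hP _ hx)).
  by rewrite (Bside_side (hQ _ hx)).
split => //.
- rewrite cardsU; suff -> : P :&: Q = set0 by rewrite cards0 subn0.
  apply/setP => x; rewrite !inE; apply/negP => /andP [/hP /Aside_side h1 /hQ /Bside_side].
  by rewrite h1.
- by rewrite /dX eA eB.
- by rewrite /tX /E eA eB es.
Qed.

Lemma same_side_lt (S Y : {set 'I_(2 * n)}) a1 a2 : Y \subset S -> a1 \in Y -> a2 \in Y -> a1 != a2 ->
  (forall x y, x \in Y -> y \in Y -> side (sX S) x = side (sX S) y) -> sX Y < sX S.
Proof.
move=> /subsetP sub h1 h2 ne hs.
have [h0 _] := pair_lt (sub _ h1) (sub _ h2) ne (hs _ _ h1 h2).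
rewrite -(prednK h0) ltnS; apply: sX_min.
apply/forall_inP => x hx; apply/forall_inP => y hy.
by rewrite prednK //; apply/eqP; apply: same_Bk; rewrite ?sub //; apply: hs.
Qed.

Lemma triple_split (Y : {set 'I_(2 * n)}) : #|Y| = 3 ->
  exists p q r, [/\ [set p; q] \subset Y, [set p; r] \subset Y, p != q, p != r &
     sX [set p; q] < sX [set p; r]].
Proof.
move=> h3; have hY := h3.
move: h3 => /triple_shape [[a1 [a2 [b [ne hA hB]]]]|[a [b1 [b2 [ne hA hB]]]]].
- have ha1 : a1 \in Aside Y by rewrite hA !inE eqxx.
  have ha2 : a2 \in Aside Y by rewrite hA !inE eqxx orbT.
  have hb : b \in Bside Y by rewrite hB !inE.
  have [hP hQ] : [set a1; a2] \subset Aside Y /\ [set a1; b] \subset Y.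
    rewrite hA subxx; split => //; apply/subsetP => x /set2P [] ->.
      exact: (subsetP (Aside_sub Y)).
    exact: (subsetP (Bside_sub Y)).
  have [_ hlt] := pair_lt (subsetP (Aside_sub Y) _ ha1) (subsetP (Aside_sub Y) _ ha2) ne
    (etrans (Aside_side ha1) (esym (Aside_side ha2))).
  exists a1, a2, b; split => //.
  + by apply: subset_trans hP (Aside_sub Y).
  + by apply/eqP => e; move: (Aside_side ha1); rewrite e (Bside_side hb).
  + rewrite (sX_eq (T := [set a1; b]) (S := Y) (u := a1) (v := b)) // ?inE ?eqxx ?orbT //.
    by rewrite (Aside_side ha1) (Bside_side hb).
- have hb1 : b1 \in Bside Y by rewrite hB !inE eqxx.
  have hb2 : b2 \in Bside Y by rewrite hB !inE eqxx orbT.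
  have ha : a \in Aside Y by rewrite hA !inE.
  have [hP hQ] : [set b1; b2] \subset Bside Y /\ [set b1; a] \subset Y.
    rewrite hB subxx; split => //; apply/subsetP => x /set2P [] ->.
      exact: (subsetP (Bside_sub Y)).
    exact: (subsetP (Aside_sub Y)).
  have [_ hlt] := pair_lt (subsetP (Bside_sub Y) _ hb1) (subsetP (Bside_sub Y) _ hb2) ne
    (etrans (Bside_side hb1) (esym (Bside_side hb2))).
  exists b1, b2, a; split => //.
  + by apply: subset_trans hP (Bside_sub Y).
  + by apply/eqP => e; move: (Bside_side hb1); rewrite e (Aside_side ha).
  + rewrite (sX_eq (T := [set b1; a]) (S := Y) (u := b1) (v := a)) // ?inE ?eqxx ?orbT //.
    by rewrite (Aside_side ha) (Bside_side hb1).
Qed.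


Lemma rect (i1 i2 j1 j2 : 'I_n) : i1 != i2 -> j1 != j2 ->
  phi [set (i1, j1); (i2, j1)] = phi [set (i1, j2); (i2, j2)] ->
  phi [set (i1, j1); (i1, j2)] = phi [set (i2, j1); (i2, j2)] -> has_alternating_rect n phi.
Proof.
move=> ni nj h1 h2.
case: (ltngtP i1 i2) => [li|li|/val_inj ei]; last by rewrite ei eqxx in ni.
all: case: (ltngtP j1 j2) => [lj|lj|/val_inj ej]; last by rewrite ej eqxx in nj.
- by exists i1, i2, j1, j2; split.
- exists i1, i2, j2, j1; split => //; split; first by rewrite h1.
  by rewrite [[set (i1, j2); _]]setUC [[set (i2, j2); _]]setUC.
- exists i2, i1, j1, j2; split => //; split; last by rewrite h2.
  by rewrite [[set (i2, j1); _]]setUC [[set (i2, j2); _]]setUC.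
- exists i2, i1, j2, j1; split => //; split.
    by rewrite [[set (i2, j2); _]]setUC [[set (i2, j1); _]]setUC h1.
  by rewrite [[set (i2, j2); _]]setUC [[set (i1, j2); _]]setUC h2.
Qed.


Lemma four (S : {set 'I_(2 * n)}) : #|S| = 4 -> 3 <= ncolors (2 * n) code S.
Proof.
move=> h4; have := card_sides S; have [hA hB] : 0 < #|Aside S| /\ 0 < #|Bside S| by apply: two_sides; rewrite h4.
rewrite h4 => hs.
have : (#|Aside S| = 2 /\ #|Bside S| = 2) \/ (#|Aside S| = 3 /\ #|Bside S| = 1) \/
       (#|Aside S| = 1 /\ #|Bside S| = 3) by lia.
case => [[eA eB]|[[eA eB]|[eA eB]]].
- move/eqP: eA => /cards2P [a1 [a2 [na eA]]].
  move/eqP: eB => /cards2P [b1 [b2 [nb eB]]].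
  have sA12 : [set a1; a2] \subset Aside S by rewrite eA.
  have sB12 : [set b1; b2] \subset Bside S by rewrite eB.
  have sA1 : [set a1] \subset Aside S by rewrite eA sub1set !inE eqxx.
  have sA2 : [set a2] \subset Aside S by rewrite eA sub1set !inE eqxx orbT.
  have sB1 : [set b1] \subset Bside S by rewrite eB sub1set !inE eqxx.
  have sB2 : [set b2] \subset Bside S by rewrite eB sub1set !inE eqxx orbT.
  have i1 : a1 \in [set a1; a2] by rewrite !inE eqxx.
  have i2 : a2 \in [set a1; a2] by rewrite !inE eqxx orbT.
  have j1 : b1 \in [set b1; b2] by rewrite !inE eqxx.
  have j2 : b2 \in [set b1; b2] by rewrite !inE eqxx orbT.
  have [s1 c1 x1 _ [t1 e1]] := cross sA12 sB1 i1 (set11 b1).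
  have [s2 c2 x2 _ [t2 e2]] := cross sA12 sB2 i1 (set11 b2).
  have [s3 c3 x3 _ [t3 e3]] := cross sA1 sB12 (set11 a1) j1.
  have [s4 c4 x4 _ [t4 e4]] := cross sA2 sB12 (set11 a2) j1.
  rewrite cards2 na !cards1 in c1 c2; rewrite cards2 nb !cards1 in c3 c4.
  rewrite !cards1 in t1 t2; rewrite cards2 nb in t3 t4.
  have k (T T' : {set 'I_(2 * n)}) : #|T| = 3 -> #|T'| = 3 -> tX T = false -> tX T' = true ->
    code T != code T'.
    by move=> h h' ht ht'; apply/eqP => /(code_inj h h') [_ _]; rewrite ht ht'.
  have k13 := k _ _ c1 c3 t1 t3; have k14 := k _ _ c1 c4 t1 t4.
  have k23 := k _ _ c2 c3 t2 t3; have k24 := k _ _ c2 c4 t2 t4.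
  case: (eqVneq (code ([set a1; a2] :|: [set b1])) (code ([set a1; a2] :|: [set b2]))) => [e12|k12];
    last by apply: (ncol3 s1 s2 s3).
  case: (eqVneq (code ([set a1] :|: [set b1; b2])) (code ([set a2] :|: [set b1; b2]))) => [e34|k34];
    last by apply: (ncol3 s1 s3 s4); rewrite // eq_sym.
  exfalso; apply: Hna.
  have [_ _ _ p12] := code_inj c1 c2 e12; have [_ _ _ p34] := code_inj c3 c4 e34.
  move: p12 p34; rewrite e1 e2 e3 e4 !imset2_set1r !imset2_set1l !imsetU1 !imset_set1 /=.
  have ha1 : a1 \in S by apply: (subsetP (Aside_sub S)); rewrite eA !inE eqxx.
  have ha2 : a2 \in S by apply: (subsetP (Aside_sub S)); rewrite eA !inE eqxx orbT.
  have hb1 : b1 \in S by apply: (subsetP (Bside_sub S)); rewrite eB !inE eqxx.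
  have hb2 : b2 \in S by apply: (subsetP (Bside_sub S)); rewrite eB !inE eqxx orbT.
  have sa : side (sX S) a1 = side (sX S) a2.
    by rewrite !Aside_side // eA !inE eqxx ?orbT.
  have sb : side (sX S) b1 = side (sX S) b2.
    by rewrite !Bside_side // eB !inE eqxx ?orbT.
  apply: rect.
    by apply/eqP => /(idx_inj ha1 ha2 sa) /eqP; rewrite (negbTE na).
  by apply/eqP => /(idx_inj hb1 hb2 sb) /eqP; rewrite (negbTE nb).
- move/eqP: eB => /cards1P [z eB].
  have [p [q [r [spq spr npq npr lt]]]] := triple_split eA.
  have hz : [set z] \subset Bside S by rewrite eB.
  have [s1 c1 x1 d1 _] := cross spq hz (set21 p q) (set11 z).
  have [s2 c2 x2 d2 _] := cross spr hz (set21 p r) (set11 z).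
  rewrite cards2 npq cards1 in c1; rewrite cards2 npr cards1 in c2.
  rewrite !sX1 !addn0 in d1 d2.
  have sY : Aside S \subset S := Aside_sub S.
  have hlt : sX (Aside S) < sX S.
    apply: (same_side_lt (a1 := p) (a2 := q)) => //.
    - by apply: (subsetP spq); rewrite !inE eqxx.
    - by apply: (subsetP spq); rewrite !inE eqxx orbT.
    - by move=> x y hx hy; rewrite !Aside_side.
  apply: (ncol3 sY s1 s2) => //; apply/eqP.
  - by move=> /(code_inj eA c1) [e _ _ _]; move: hlt; rewrite e x1 ltnn.
  - by move=> /(code_inj eA c2) [e _ _ _]; move: hlt; rewrite e x2 ltnn.
  - by move=> /(code_inj c1 c2) [_ e _ _]; move: lt; rewrite d1 d2 in e; rewrite e ltnn.
- move/eqP: eA => /cards1P [z eA].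
  have [p [q [r [spq spr npq npr lt]]]] := triple_split eB.
  have hz : [set z] \subset Aside S by rewrite eA.
  have [s1 c1 x1 d1 _] := cross hz spq (set11 z) (set21 p q).
  have [s2 c2 x2 d2 _] := cross hz spr (set11 z) (set21 p r).
  rewrite cards2 npq cards1 in c1; rewrite cards2 npr cards1 in c2.
  rewrite !sX1 !add0n in d1 d2.
  have sY : Bside S \subset S := Bside_sub S.
  have hlt : sX (Bside S) < sX S.
    apply: (same_side_lt (a1 := p) (a2 := q)) => //.
    - by apply: (subsetP spq); rewrite !inE eqxx.
    - by apply: (subsetP spq); rewrite !inE eqxx orbT.
    - by move=> x y hx hy; rewrite !Bside_side.
  apply: (ncol3 sY s1 s2) => //; apply/eqP.
  - by move=> /(code_inj eB c1) [e _ _ _]; move: hlt; rewrite e x1 ltnn.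
  - by move=> /(code_inj eB c2) [e _ _ _]; move: hlt; rewrite e x2 ltnn.
  - by move=> /(code_inj c1 c2) [_ e _ _]; move: lt; rewrite d1 d2 in e; rewrite e ltnn.
Qed.

End Part2.




Lemma part2 n (hn : 0 < n) L (hL : n <= 2 ^ L) gg phi :
  grid_coloring n gg phi -> ~ has_alternating_rect n phi -> f3_ok (2 * n) (2 * L ^ 2 * gg).
Proof.
move=> Hcol Hna; exists (code hn hL gg phi); split.
  by move=> T; apply: code_lt.
by move=> S; apply: four.
Qed.

Lemma del4 (T : finType) (a b c d : T) : a != b -> a != c -> a != d -> b != c -> b != d -> c != d ->
  [/\ ([set a; b] :|: [set c; d]) :\ a = [set b] :|: [set c; d],
      ([set a; b] :|: [set c; d]) :\ b = [set a] :|: [set c; d],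
      ([set a; b] :|: [set c; d]) :\ c = [set a; b] :|: [set d] &
      ([set a; b] :|: [set c; d]) :\ d = [set a; b] :|: [set c]].
Proof.
move=> hab hac had hbc hbd hcd.
have hba := hab; have hca := hac; have hda := had; have hcb := hbc; have hdb := hbd; have hdc := hcd.
rewrite eq_sym in hba; rewrite eq_sym in hca; rewrite eq_sym in hda.
rewrite eq_sym in hcb; rewrite eq_sym in hdb; rewrite eq_sym in hdc.
split; apply/setP => y; rewrite !inE.
all: case: (eqVneq y a) => [?|ya]; [| case: (eqVneq y b) => [?|yb];
  [| case: (eqVneq y c) => [?|yc]; [| case: (eqVneq y d) => [?|yd]]]].
all: try subst y.
all: by rewrite ?eqxx ?(negbTE hab) ?(negbTE hac) ?(negbTE had) ?(negbTE hbc) ?(negbTE hbd)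
  ?(negbTE hcd) ?(negbTE hba) ?(negbTE hca) ?(negbTE hda) ?(negbTE hcb) ?(negbTE hdb)
  ?(negbTE hdc) ?(negbTE ya) ?(negbTE yb) ?(negbTE yc) ?(negbTE yd).
Qed.

Section Part1.
Variables (n : nat) (r : nat) (c : {set 'I_(2 * n)} -> nat)
  (Hc : triple_coloring (2 * n) r c)
  (H4 : forall S : {set 'I_(2 * n)}, #|S| = 4 -> 3 <= ncolors (2 * n) c S).

Lemma rowv_lt (i : 'I_n) : (i : nat) < 2 * n. Proof. by have := ltn_ord i; lia. Qed.
Lemma colv_lt (j : 'I_n) : n + j < 2 * n. Proof. by have := ltn_ord j; lia. Qed.
Definition rowv (i : 'I_n) : 'I_(2 * n) := Ordinal (rowv_lt i).
Definition colv (j : 'I_n) : 'I_(2 * n) := Ordinal (colv_lt j).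

Lemma eq_rowv a b : (rowv a == rowv b) = (a == b).
Proof. by apply/eqP/eqP => [/(congr1 val) /= /val_inj|->]. Qed.
Lemma eq_colv a b : (colv a == colv b) = (a == b).
Proof. by apply/eqP/eqP => [/(congr1 val) /= /addnI /val_inj|->]. Qed.
Lemma eq_rc a b : (rowv a == colv b) = false.
Proof. apply/eqP => /(congr1 val) /=; have := ltn_ord a; lia. Qed.

Definition F (e : {set gvert n}) : {set 'I_(2 * n)} :=
  [set rowv u.1 | u in e] :|: [set colv u.2 | u in e].
Definition c' e := c (F e).

Lemma F2 (u v : gvert n) : F [set u; v] = [set rowv u.1; rowv v.1] :|: [set colv u.2; colv v.2].
Proof. by rewrite /F !imsetU1 !imset_set1. Qed.

Lemma card_disj (R C : {set 'I_(2 * n)}) : (forall x, x \in R -> x < n) ->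
  (forall x, x \in C -> n <= x) -> #|R :|: C| = #|R| + #|C|.
Proof.
move=> hR hC; rewrite cardsU; suff -> : R :&: C = set0 by rewrite cards0 subn0.
apply/setP => x; rewrite !inE; apply/negP => /andP [/hR h1 /hC h2]; lia.
Qed.

Lemma rlt x a b : x \in [set rowv a; rowv b] -> x < n.
Proof. by rewrite !inE => /orP [] /eqP -> /=; apply: ltn_ord. Qed.
Lemma rlt1 x a : x \in [set rowv a] -> x < n.
Proof. by rewrite !inE => /eqP -> /=; apply: ltn_ord. Qed.
Lemma cge x a b : x \in [set colv a; colv b] -> n <= x.
Proof. by rewrite !inE => /orP [] /eqP -> /=; apply: leq_addr. Qed.
Lemma cge1 x a : x \in [set colv a] -> n <= x.
Proof. by rewrite !inE => /eqP -> /=; apply: leq_addr. Qed.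

Lemma col_ok : grid_coloring n r c'.
Proof.
move=> [u1 u2] [v1 v2]; rewrite /grid_adj /= => /andP [ne h]; apply: Hc.
rewrite /c' F2 /= card_disj; last by move=> x; apply: cge.
  2: by move=> x; apply: rlt.
rewrite !cards2 eq_rowv eq_colv.
move: ne h; rewrite xpair_eqE; case: (u1 == v1); case: (u2 == v2) => //.
Qed.

Lemma no_alt : ~ has_alternating_rect n c'.
Proof.
move=> [i [i' [j [j' [li lj [E1 E2]]]]]].
move: E1 E2; rewrite /c' !F2 /= !setUid.
set ri := rowv i; set ri' := rowv i'; set cj := colv j; set cj' := colv j'.
move=> E1 E2.
have hii : ri != ri' by rewrite eq_rowv; apply/eqP => e; move: li; rewrite e ltnn.
have hjj : cj != cj' by rewrite eq_colv; apply/eqP => e; move: lj; rewrite e ltnn.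
have h1 : ri != cj by rewrite eq_rc.
have h2 : ri != cj' by rewrite eq_rc.
have h3 : ri' != cj by rewrite eq_rc.
have h4 : ri' != cj' by rewrite eq_rc.
set S := [set ri; ri'] :|: [set cj; cj'].
have cS : #|S| = 4.
  rewrite card_disj; last by move=> x; apply: cge.
    by rewrite !cards2 hii hjj.
  by move=> x; apply: rlt.
have := H4 cS; apply/negP; rewrite -ltnNge ltnS /ncolors.
have [d1 d2 d3 d4] := del4 hii h1 h2 h3 h4 hjj.
apply: (leq_trans (uniq_leq_size (s2 := [:: c ([set ri; ri'] :|: [set cj]); c ([set ri] :|: [set cj; cj'])]) (undup_uniq _) _)) => //.
move=> x; rewrite mem_undup => /mapP [T]; rewrite mem_enum inE powersetE => /andP [sT /eqP cT] ->.
have [y yS eT] : exists2 y, y \in S & T = S :\ y.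
  have : #|S :\: T| == 1 by rewrite cardsD (setIidPr sT) cS cT.
  move=> /cards1P [y hy]; exists y.
    have : y \in S :\: T by rewrite hy set11.
    by rewrite inE => /andP [].
  apply/setP => z; rewrite -hy !in_setD; have := subsetP sT z.
  by case: (z \in T) => /= [-> // | _]; rewrite andNb.
rewrite eT !inE.
move: yS; rewrite !inE => /orP [/orP [] | /orP []] /eqP ->.
- by rewrite d1 -E2 eqxx orbT.
- by rewrite d2 eqxx orbT.
- by rewrite d3 -E1 eqxx.
- by rewrite d4 eqxx.
Qed.

Lemma part1 : g_ok n r.
Proof. exists c'; split; [exact: col_ok | exact: no_alt]. Qed.

End Part1.

Theorem proposition4p1 (n : nat) (hn : 0 < n) :
  g n <= f3 (2 * n) /\ f3 (2 * n) <= 2 * (up_log 2 n) ^ 2 * g n.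
Proof.
split.
- rewrite /f3; case: ex_minnP => r /pboolP [c [Hc H4]] _.
  rewrite /g; case: ex_minnP => m _ hmin; apply: hmin.
  by apply/pboolP; apply: (part1 Hc H4).
- rewrite /g; case: ex_minnP => gg /pboolP [phi [Hcol Hna]] _.
  rewrite /f3; case: ex_minnP => m _ hmin; apply: hmin.
  apply/pboolP; exact: (part2 hn (@up_logP 2 n isT) Hcol Hna).
Qed.
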